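(* As formal power series in variables $p_1,p_2,\dots$, $$\sum_{\ell(\mu)\ge2}\frac{(|\mu|+\ell(\mu)-3)!\,(\ell(\mu)-1)\,p_\mu}{(|\mu|-1)!\,z_\mu}=\frac12\left(\sum_{\mu\ne\emptyset}\frac{(|\mu|+\ell(\mu)-2)!\,p_\mu}{(|\mu|-1)!\,z_\mu}\right)^2,$$ where the sums are over partitions $\mu$.
   Context: A partition is $\mu=(\mu_1\ge\cdots\ge\mu_k>0)$ with $|\mu|=\sum\mu_i$ and $\ell(\mu)=k$. $m_j(\mu)$ is the number of parts equal to $j$, $z_\mu=\prod_jm_j(\mu)!\,j^{m_j(\mu)}$, and $p_\mu=\prod_jp_j^{m_j(\mu)}$. *)

(* Defs.v *)
(* The monomials p_mu are indexed by partitions mu (a weakly decreasing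
   sequence of positive integers); a formal power series is represented by its
   coefficient function on monomials. *)
From mathcomp Require Import all_boot all_order all_algebra.
Set Implicit Arguments. Unset Strict Implicit. Unset Printing Implicit Defensive.
Import GRing.Theory Num.Theory.
Local Open Scope ring_scope.

Definition is_partition (mu : seq nat) : bool :=
  sorted geq mu && all (fun x => (0 < x)%N) mu.

(* |mu| = sumn mu, l(mu) = size mu, m_j(mu) = count_mem j mu *)
Definition zee (mu : seq nat) : nat :=
  (\prod_(j <- undup mu) ((count_mem j mu)`! * j ^ (count_mem j mu)))%N.

Definition fps := seq nat -> rat.

(* all ways of writing the multiset mu as a union alpha (+) beta, each
   (ordered) decomposition listed exactly once *)
Definition splittings (mu : seq nat) : seq (seq nat * seq nat) :=
  undup [seq (mask (tval m) mu, mask (map negb (tval m)) mu)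
        | m <- enum {: (size mu).-tuple bool}].

(* product of formal power series: p_alpha * p_beta = p_(alpha u beta) *)
Definition fps_mul (F G : fps) : fps :=
  fun mu => \sum_(ab <- splittings mu) F ab.1 * G ab.2.

Definition lhs_series : fps := fun mu =>
  if (1 < size mu)%N then
    ((sumn mu + size mu - 3)`! * (size mu).-1)%:R / (((sumn mu).-1)`! * zee mu)%:R
  else 0.

Definition base_series : fps := fun mu =>
  if (0 < size mu)%N then
    ((sumn mu + size mu - 2)`!)%:R / (((sumn mu).-1)`! * zee mu)%:R
  else 0.

(* Main.v *)
Require Import Defs.
From mathcomp Require Import all_boot all_order all_algebra ring.
Set Implicit Arguments. Unset Strict Implicit. Unset Printing Implicit Defensive.
Import GRing.Theory Num.Theory.
Local Open Scope ring_scope.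
Definition Rf (k : nat) (y : rat) : rat := \prod_(i < k) (y + i%:R).

Lemma Rf0 y : Rf 0 y = 1.
Proof. by rewrite /Rf big_ord0. Qed.

Lemma RfS k y : Rf k.+1 y = Rf k y * (y + k%:R).
Proof. by rewrite /Rf big_ord_recr. Qed.

Lemma RfSl k y : Rf k.+1 y = y * Rf k (y + 1).
Proof.
rewrite /Rf big_ord_recl /= addr0; congr (_ * _); apply: eq_bigr => i _.
by rewrite /= -nat1r addrA.
Qed.

Definition xs l (x : 'I_l -> nat) (S : {set 'I_l}) : rat := (\sum_(i in S) x i)%N%:R.

Lemma xsD1 l (x : 'I_l -> nat) (S : {set 'I_l}) j : j \in S -> xs x S = (x j)%:R + xs x (S :\ j).
Proof. by move=> jS; rewrite /xs (big_setD1 j jS) natrD. Qed.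

Definition Q l (x : 'I_l -> nat) (a : rat) (S : {set 'I_l}) : rat :=
  if S == set0 then 1 else a * Rf #|S|.-1 (a + xs x S + 1).

Lemma DL l (x : 'I_l -> nat) (b : rat) (E : {set 'I_l}) :
  Q x (b + 1) E - Q x b E = \sum_(j in E) Q x (b + (x j)%:R + 1) (E :\ j).
Proof.
have [->|En0] := eqVneq E set0.
  by rewrite big_set0 /Q eqxx subrr.
have := En0; rewrite -card_gt0 => Egt0.
case: (ltnP 1 #|E|) => hE; last first.
  have /cards1P [j ->] : #|E| == 1%N by rewrite eqn_leq hE Egt0.
  have Hj0 : ([set j] == set0) = false by apply/negP => /eqP/setP/(_ j); rewrite !inE eqxx.
  rewrite big_set1 setDv /Q eqxx Hj0 cards1 !Rf0 !mulr1; ring.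
rewrite /Q (negPf En0).
have Hj : forall j, j \in E -> Q x (b + (x j)%:R + 1) (E :\ j) =
   (b + (x j)%:R + 1) * Rf (#|E| - 2) (b + xs x E + 2%:R).
  move=> j jE; rewrite /Q ifN; last first.
    by rewrite -card_gt0; rewrite (cardsD1 j E) jE in hE.
  congr (_ * Rf _ _).
    by rewrite (cardsD1 j E) jE /= add1n subn2.
  rewrite (xsD1 x jE); ring.
rewrite (eq_bigr _ Hj) -mulr_suml.
have -> : \sum_(i in E) (b + (x i)%:R + 1) = (b + 1) * #|E|%:R + xs x E.
  rewrite (eq_bigr (fun i => (b + 1) + (x i)%:R)); last by move=> i _; ring.
  by rewrite big_split /= sumr_const /xs natr_sum mulr_natr.
have [k hk] : exists k, #|E| = k.+2 by exists (#|E| - 2)%N; rewrite -addn2 subnK.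
rewrite hk /= ?subSS ?subn0 (RfS k (b + 1 + xs x E + 1)) (RfSl k (b + xs x E + 1)).
have -> : b + 1 + xs x E + 1 = b + xs x E + 2%:R by ring.
have -> : b + xs x E + 1 + 1 = b + xs x E + 2%:R by ring.
rewrite -[k.+2]addn2 !natrD; ring.
Qed.

Lemma Q0 l (x : 'I_l -> nat) S : Q x 0 S = (S == set0)%:R.
Proof. by rewrite /Q; case: (S == set0); rewrite ?mul0r. Qed.

Lemma exch_sub l (G : {set 'I_l} -> 'I_l -> rat) (V : {set 'I_l}) :
  \sum_(S : {set 'I_l} | S \subset V) \sum_(j in V :\: S) G S j =
  \sum_(j in V) \sum_(S : {set 'I_l} | S \subset V :\ j) G S j.
Proof.
rewrite (exchange_big_dep (fun j => j \in V)) /=; last by move=> S j _; rewrite inE => /andP[].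
apply: eq_bigr => j jV; apply: eq_bigl => S.
by rewrite subsetD1 inE jV andbT.
Qed.

Lemma key_aux l (x : 'I_l -> nat) (V : {set 'I_l}) :
  (forall W : {set 'I_l}, (#|W| < #|V|)%N -> forall (a : rat) (b : nat),
    \sum_(S : {set 'I_l} | S \subset W) Q x a S * Q x b%:R (W :\: S) = Q x (a + b%:R) W) ->
  forall (a : rat) (b : nat),
    \sum_(S : {set 'I_l} | S \subset V) Q x a S * Q x b%:R (V :\: S) = Q x (a + b%:R) V.
Proof.
move=> IH a; elim=> [|b IHb].
  rewrite addr0 (bigD1 V) ?subxx //= setDv Q0 eqxx mulr1 big1 ?addr0 //.
  move=> S /andP[SV SnV]; rewrite Q0 setD_eq0.
  suff -> : (V \subset S) = false by rewrite mulr0.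
  apply/negP => VS; move/negP: SnV; apply; apply/eqP/eqP; rewrite eqEsubset SV VS.
  done.
have DLb := DL x.
under eq_bigr => S _ do rewrite -natr1 -(subrK (Q x b%:R (V :\: S)) (Q x (b%:R + 1) _)) DLb mulrDr.
rewrite big_split /= IHb.
under eq_bigr => S _ do rewrite mulr_sumr.
rewrite exch_sub.
have H2 : forall j, j \in V -> \sum_(S : {set 'I_l} | S \subset V :\ j)
     Q x a S * Q x (b%:R + (x j)%:R + 1) (V :\: S :\ j) = Q x (a + b%:R + (x j)%:R + 1) (V :\ j).
  move=> j jV.
  have -> : b%:R + (x j)%:R + 1 = ((b + x j).+1)%:R :> rat by rewrite -natr1 natrD.
  have -> : a + b%:R + (x j)%:R + 1 = a + ((b + x j).+1)%:R by rewrite -natr1 natrD !addrA.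
  rewrite -IH; last by rewrite (cardsD1 j V) jV.
  apply: eq_bigr => S _; congr (_ * Q _ _ _).
  by apply/setP => i; rewrite !inE; case: (i == j); case: (i \in S).
rewrite (eq_bigr _ H2) -(DL x (a + b%:R)) -natr1 addrA; ring.
Qed.

Lemma key l (x : 'I_l -> nat) (V : {set 'I_l}) (a : rat) (b : nat) :
  \sum_(S : {set 'I_l} | S \subset V) Q x a S * Q x b%:R (V :\: S) = Q x (a + b%:R) V.
Proof.
move: {2}#|V| (leqnn #|V|) => n hV; elim: n V hV a b => [|n IH] V hV.
  by apply: key_aux => W hW; move: (leq_trans hW hV).
apply: key_aux => W hW; apply: IH; rewrite -ltnS; exact: leq_trans hW hV.
Qed.

Definition g l (x : 'I_l -> nat) (S : {set 'I_l}) : rat :=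
  if S == set0 then 0 else Rf #|S|.-1 (xs x S).

Lemma g_root l (x : 'I_l -> nat) (S : {set 'I_l}) :
  g x S = \sum_(r in S) Q x (x r)%:R (S :\ r).
Proof.
have [->|Sn0] := eqVneq S set0; first by rewrite big_set0 /g eqxx.
rewrite /g (negPf Sn0).
have := Sn0; rewrite -card_gt0 => Sgt0.
case: (ltnP 1 #|S|) => hS; last first.
  have /cards1P [j ->] : #|S| == 1%N by rewrite eqn_leq hS Sgt0.
  by rewrite big_set1 setDv /Q eqxx cards1 Rf0.
have [k hk] : exists k, #|S| = k.+2 by exists (#|S| - 2)%N; rewrite -addn2 subnK.
have Hj : forall j, j \in S -> Q x (x j)%:R (S :\ j) = (x j)%:R * Rf k (xs x S + 1).
  move=> j jS; rewrite /Q ifN; last by rewrite -card_gt0; move: hS; rewrite (cardsD1 j S) jS add1n ltnS.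
  have hc : #|S :\ j| = k.+1 by move: hk; rewrite (cardsD1 j S) jS add1n => -[].
  by rewrite hc /= (xsD1 x jS).
rewrite (eq_bigr _ Hj) -mulr_suml hk /= RfSl; congr (_ * _).
by rewrite /xs natr_sum.
Qed.

Lemma setU1D1 l (r : 'I_l) (S : {set 'I_l}) : ((r |: S) :\ r == S) = (r \notin S).
Proof.
apply/eqP/idP => [<-|rS]; first by rewrite !inE eqxx.
by apply/setP => i; rewrite !inE; case: eqP => // ->; rewrite (negPf rS).
Qed.

Lemma T_formula l (x : 'I_l -> nat) (U : {set 'I_l}) :
  \sum_(S : {set 'I_l} | S \subset U) g x S * g x (U :\: S) =
  \sum_(r in U) \sum_(r' in U :\ r) Q x ((x r)%:R + (x r')%:R) (U :\ r :\ r').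
Proof.
under eq_bigr => S _ do rewrite !g_root big_distrl /=.
under eq_bigr => S _ do under eq_bigr => r _ do rewrite big_distrr /=.
rewrite (exchange_big_dep (fun r => r \in U)) /=; last by move=> S r SU rS; apply: (subsetP SU).
apply: eq_bigr => r rU.
rewrite (exchange_big_dep (fun r' => r' \in U :\ r)) /=; last first.
  move=> S r' /andP[SU rS]; rewrite !inE => /andP[r'S ->]; rewrite andbT.
  by apply/eqP => e; rewrite e rS in r'S.
apply: eq_bigr => r'; rewrite inE => /andP[r'r r'U].
rewrite (reindex_onto (fun S' => r |: S') (fun S => S :\ r)) /=; last first.
  by move=> S /andP[/andP[_ rS] _]; rewrite setD1K.
rewrite -key.
apply: eq_big => S'.
  rewrite inE in r'r; rewrite subUset sub1set rU setU11 /= !inE negb_or (negPf r'r) r'U /= andbT setU1D1 !subsetD1 andbT.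
  by case: (S' \subset U); case: (r \in S'); case: (r' \in S').
move=> /andP[_ /eqP hS]; rewrite hS; congr (_ * Q _ _ _).
by apply/setP => i; rewrite !inE; case: (i == r'); case: (i == r); case: (i \in S'); case: (i \in U).
Qed.

Lemma sum_xs l (x : 'I_l -> nat) (U : {set 'I_l}) : \sum_(r in U) (x r)%:R = xs x U.
Proof. by rewrite /xs natr_sum. Qed.

Lemma T_value l (x : 'I_l -> nat) (U : {set 'I_l}) :
  \sum_(r in U) \sum_(r' in U :\ r) Q x ((x r)%:R + (x r')%:R) (U :\ r :\ r')
  = if (1 < #|U|)%N then 2%:R * (#|U|.-1)%:R * Rf (#|U| - 2) (xs x U) else 0.
Proof.
case: ltnP => hU; last first.
  apply: big1 => r rU; apply: big1 => r' r'U.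
  by move: hU; rewrite (cardsD1 r U) rU (cardsD1 r' (U :\ r)) r'U.
have [k hk] : exists k, #|U| = k.+2 by exists (#|U| - 2)%N; rewrite -addn2 subnK.
rewrite hk /= ?subSS ?subn0.
have hc : forall r r', r \in U -> r' \in U :\ r -> #|U :\ r :\ r'| = k.
  move=> r r' rU r'U; move: hk; rewrite (cardsD1 r U) rU (cardsD1 r' (U :\ r)) r'U.
  by rewrite !add1n => -[].
case: k hk hc => [|k] hk hc.
  rewrite (eq_bigr (fun r => 1 *+ 1)); last first.
    move=> r rU; rewrite (eq_bigr (fun _ => 1)); last first.
      move=> r' r'U; rewrite /Q; move: (hc r r' rU r'U) => /eqP; rewrite cards_eq0 => ->.
      done.
    have h1 : #|U :\ r| = 1%N by move: hk; rewrite (cardsD1 r U) rU add1n => -[].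
    by rewrite sumr_const h1.
  by rewrite sumr_const hk Rf0; ring.
have HQ : forall r r', r \in U -> r' \in U :\ r ->
   Q x ((x r)%:R + (x r')%:R) (U :\ r :\ r') = ((x r)%:R + (x r')%:R) * Rf k (xs x U + 1).
  move=> r r' rU r'U; rewrite /Q ifN; last by rewrite -card_gt0 (hc r r' rU r'U).
  by rewrite (hc r r' rU r'U) /= (xsD1 x rU) (xsD1 x r'U) !addrA.
rewrite (eq_bigr (fun r => ((x r)%:R * k.+2%:R + (xs x U - (x r)%:R)) * Rf k (xs x U + 1))); last first.
  move=> r rU; rewrite (eq_bigr _ (fun r' r'U => HQ r r' rU r'U)) -mulr_suml big_split /= sumr_const sum_xs.
  have -> : #|U :\ r| = k.+2 by move: hk; rewrite (cardsD1 r U) rU add1n => -[].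
  by rewrite (xsD1 x rU) mulr_natr; congr (_ * _); ring.
rewrite -mulr_suml big_split /= -mulr_suml sum_xs big_split /= sumr_const sumrN sum_xs hk.
rewrite (RfSl k) -[k.+3]addn1 -[k.+2]addn1 -[k.+1]addn1 -mulr_natr !natrD; ring.
Qed.

Local Close Scope ring_scope.
Fixpoint allbits n : seq bitseq :=
  if n is n'.+1 then map (cons true) (allbits n') ++ map (cons false) (allbits n')
  else [:: [::]].

Lemma mem_allbits n m : (m \in allbits n) = (size m == n).
Proof.
elim: n m => [|n IH] [|b m] //=.
  by apply/negbTE; rewrite mem_cat; apply/negP => /orP[] /mapP[? _].
rewrite mem_cat eqSS -IH; case: b.
  apply/idP/idP => [/orP[] /mapP[y yA] [] // -> //|h].
  by rewrite map_f.
apply/idP/idP => [/orP[] /mapP[y yA] [] // -> //|h].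
by rewrite map_f ?orbT.
Qed.

Lemma uniq_allbits n : uniq (allbits n).
Proof.
have inj b : injective (cons b) by move=> ? ? [].
elim: n => [|n IH] //=; rewrite cat_uniq !(map_inj_uniq (inj _ _)) IH /= andbT.
apply/hasPn => y /mapP[z _ ->]; by apply/negP => /mapP[w _ []].
Qed.

Lemma perm_allbits n : perm_eq (map val (enum {: n.-tuple bool})) (allbits n).
Proof.
apply: uniq_perm; first by rewrite map_inj_uniq ?enum_uniq //; exact: val_inj.
  exact: uniq_allbits.
move=> m; rewrite mem_allbits; apply/mapP/idP => [[t _ ->]|/eqP h].
  by rewrite size_tuple.
by exists (Tuple (introT eqP h)); rewrite ?mem_enum.
Qed.

Lemma count_mask_compl (T : eqType) (P : pred T) (s : seq T) (m : bitseq) :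
  size m = size s -> (count P (mask m s) + count P (mask (map negb m) s))%N = count P s.
Proof.
elim: s m => [|y s IH] [|b m] //= [hm].
by case: b => /=; rewrite -(IH m hm) /=; ring.
Qed.

Lemma all_rem (T : eqType) (P : pred T) y (t : seq T) : all P t -> all P (rem y t).
Proof. by move=> /allP h; apply/allP => z /mem_rem /h. Qed.

Lemma fibre B (s t : seq nat) : all (fun y => y < B) s -> all (fun y => y < B) t ->
  count (fun m => perm_eq (mask m s) t) (allbits (size s)) =
  \prod_(j < B) 'C(count_mem (j : nat) s, count_mem (j : nat) t).
Proof.
elim: s t => [|y s IH] t /= hs ht.
  case: t ht => [|z t] /= ht.
    by rewrite big1 // => j _; rewrite bin0.
  rewrite /= perm_sym; case: perm_nilP => // _.
  move/andP: ht => [zB _].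
  by rewrite (bigD1 (Ordinal zB)) //= eqxx bin0n /= mul0n.
move/andP: hs => [yB hs].
rewrite count_cat !count_map.
have -> : count (preim (cons false) (fun m => perm_eq (mask m (y :: s)) t)) (allbits (size s))
   = count (fun m => perm_eq (mask m s) t) (allbits (size s)) by [].
rewrite IH // (bigD1 (Ordinal yB)) //= [in RHS](bigD1 (Ordinal yB)) //= eqxx add1n.
case yt: (y \in t); last first.
  rewrite (eq_count (a2 := pred0)); last first.
    by move=> m /=; apply/negP => /perm_mem /(_ y); rewrite inE eqxx yt.
  rewrite count_pred0 add0n.
  have -> : count_mem y t = 0%N by apply/count_memPn; rewrite yt.
  rewrite !bin0; congr (_ * _); apply: eq_bigr => j /negPf hj.
  have -> : (y == j) = false by move: hj; rewrite -val_eqE /= eq_sym.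
  by [].
have ht' := perm_to_rem yt.
rewrite (eq_count (a2 := fun m => perm_eq (mask m s) (rem y t))); last first.
  by move=> m /=; rewrite (permPr ht') perm_cons.
rewrite IH //; last exact: all_rem.
have hc : forall j : nat, count_mem j t = ((y == j) + count_mem j (rem y t))%N.
  by move=> j; rewrite (permP ht') /=.
rewrite hc eqxx add1n binS mulnDl addnC; congr (_ + _).
  congr (_ * _); apply: eq_bigr => j /negPf hj.
  rewrite hc; congr ('C(_, _)); rewrite eq_sym.
  by move: hj; rewrite -val_eqE /= => ->.
rewrite (bigD1 (Ordinal yB)) //=; congr (_ * _); apply: eq_bigr => j /negPf hj.
have hyj : (y == j) = false by move: hj; rewrite -val_eqE /= eq_sym.
by rewrite hc hyj.
Qed.


Lemma all_mask B (m : bitseq) (s : seq nat) : all (fun y => y < B) s -> all (fun y => y < B) (mask m s).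
Proof. by move=> /allP h; apply/allP => z /mem_mask /h. Qed.

Lemma zee_prod B s : all (fun y => y < B) s ->
  zee s = \prod_(j < B) ((count_mem (j : nat) s)`! * j ^ (count_mem (j : nat) s)).
Proof.
move=> hs; rewrite -(big_mkord xpredT (fun j => (count_mem j s)`! * j ^ (count_mem j s))).
rewrite /index_iota subn0.
rewrite (eq_bigr (fun j => if j \in s then (count_mem j s)`! * j ^ (count_mem j s) else 1)); last first.
  move=> j _; case: ifP => // /negbT js.
  by have -> : count_mem j s = 0 by apply/count_memPn.
rewrite -big_mkcond -big_filter /zee; apply: perm_big.
apply: uniq_perm; first exact: undup_uniq.
  by rewrite filter_uniq // iota_uniq.
move=> j; rewrite mem_undup mem_filter mem_iota add0n /=.
by case js: (j \in s) => //=; move/allP: hs => /(_ j js).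
Qed.

Lemma zee_split B (mu : seq nat) (m : bitseq) : all (fun y => y < B) mu -> size m = size mu ->
  (\prod_(j < B) 'C(count_mem (j : nat) mu, count_mem (j : nat) (mask m mu)) *
    zee (mask m mu) * zee (mask (map negb m) mu))%N = zee mu.
Proof.
move=> hB hm; rewrite !(zee_prod (B := B)) ?all_mask // -!big_split /=.
apply: eq_bigr => j _.
have hc := count_mask_compl (pred1 (nat_of_ord j)) hm.
set a := count_mem _ (mask m mu) in hc *.
set b := count_mem _ (mask (map negb m) mu) in hc *.
rewrite -hc.
have hf := bin_fact (leq_addr b a); rewrite addKn in hf.
rewrite -hf expnD; ring.
Qed.

Local Open Scope ring_scope.
Lemma undup_sum (T : eqType) (H : T -> rat) (L : seq T) :
  \sum_(y <- undup L) H y = \sum_(z <- L) H z / (count_mem z L)%:R.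
Proof.
rewrite -[in RHS](perm_big _ (perm_count_undup L)) big_flatten big_map /=.
apply: eq_big_seq => y; rewrite mem_undup => yL.
rewrite big_nseq.
have -> : forall n (c : rat), iter n (+%R c) 0 = c *+ n.
  by move=> n c; elim: n => //= n ->; rewrite mulrS.
have e : forall c : rat, c *+ count_mem y L = c * (count_mem y L)%:R by move=> c; rewrite mulr_natr.
rewrite e divfK // pnatr_eq0 -lt0n.
by rewrite -has_count has_pred1.
Qed.

Lemma fact_Rf n k : (0 < n)%N -> ((n + k).-1)`!%:R = ((n.-1)`!)%:R * Rf k n%:R :> rat.
Proof.
move=> n0; elim: k => [|k IH]; first by rewrite addn0 Rf0 mulr1.
rewrite RfS mulrA -IH addnS /=.
have hp : (0 < n + k)%N by rewrite addn_gt0 n0.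
by rewrite -{1}(prednK hp) factS natrM mulrC prednK // natrD.
Qed.

Definition Gs (s : seq nat) : rat :=
  if (0 < size s)%N then Rf (size s).-1 (sumn s)%:R else 0.

Lemma size_le_sumn s : all (fun y => 0 < y)%N s -> (size s <= sumn s)%N.
Proof. by elim: s => //= y s IH /andP[y0 /IH h]; rewrite -add1n leq_add. Qed.

Lemma zee_gt0 s : all (fun y => 0 < y)%N s -> (0 < zee s)%N.
Proof.
move=> /allP hs; rewrite /zee big_seq; apply: prodn_cond_gt0 => j; rewrite mem_undup => js.
by rewrite muln_gt0 fact_gt0 expn_gt0 hs.
Qed.

Lemma base_eq s : all (fun y => 0 < y)%N s -> base_series s = Gs s / (zee s)%:R.
Proof.
move=> hs; rewrite /base_series /Gs.
case: (size s) (size_le_sumn hs) => [|k] hk /=; first by rewrite mul0r.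
have n0 : (0 < sumn s)%N by apply: leq_trans hk.
have -> : (sumn s + k.+1 - 2)%N = (sumn s + k).-1 by rewrite addnS subn2.
rewrite fact_Rf // natrM.
have h1 : ((sumn s).-1)`!%:R != 0 :> rat by rewrite pnatr_eq0 -lt0n fact_gt0.
have h2 : (zee s)%:R != 0 :> rat by rewrite pnatr_eq0 -lt0n zee_gt0.
field; by rewrite h1 h2.
Qed.

Lemma lhs_eq s : all (fun y => 0 < y)%N s -> lhs_series s =
  (if (1 < size s)%N then 2%:R * (size s).-1%:R * Rf (size s - 2) (sumn s)%:R else 0) /
  (2%:R * (zee s)%:R).
Proof.
move=> hs; rewrite /lhs_series.
case: ltnP => h; last by rewrite mul0r.
have [k hk] : exists k, size s = k.+2 by exists (size s - 2)%N; rewrite -addn2 subnK.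
have hl := size_le_sumn hs; rewrite hk in hl.
have n0 : (0 < sumn s)%N by apply: leq_trans hl.
rewrite hk /= ?subSS ?subn0.
have -> : (sumn s + k.+2 - 3)%N = (sumn s + k).-1 by rewrite !addnS subSS subn2.
rewrite natrM fact_Rf // natrM.
have h1 : ((sumn s).-1)`!%:R != 0 :> rat by rewrite pnatr_eq0 -lt0n fact_gt0.
have h2 : (zee s)%:R != 0 :> rat by rewrite pnatr_eq0 -lt0n zee_gt0.
field; by rewrite h1 h2.
Qed.

Lemma mask_sums (s : seq nat) (m : bitseq) : size m = size s ->
  sumn (mask m s) = (\sum_(i < size s | nth false m i) nth 0 s i)%N /\
  size (mask m s) = (\sum_(i < size s | nth false m i) 1)%N.
Proof.
elim: s m => [|y s IH] [|b m] //=; first by rewrite !big_ord0.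
move/eqP; rewrite eqSS => /eqP hm.
have [IH1 IH2] := IH m hm.
split.
  rewrite big_mkcond big_ord_recl /= -big_mkcond /=.
  by case: b => /=; rewrite IH1.
rewrite big_mkcond big_ord_recl /= -big_mkcond /=.
by case: b => /=; rewrite IH2.
Qed.

Lemma Gs_gen (mu : seq nat) (m : bitseq) (T : {set 'I_(size mu)}) :
  size m = size mu -> (forall i : 'I_(size mu), nth false m i = (i \in T)) ->
  Gs (mask m mu) = g (fun i : 'I_(size mu) => nth 0 mu i) T.
Proof.
move=> hm hn.
have [h1 h2] := mask_sums hm.
rewrite /Gs /g h1 h2 (eq_bigl _ _ hn) sum1_card card_gt0.
by case: eqP => [->|_] //=; rewrite /xs (eq_bigl _ _ hn).
Qed.

Lemma sum_sets (mu : seq nat) :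
  \sum_(t : (size mu).-tuple bool) Gs (mask t mu) * Gs (mask (map negb t) mu) =
  \sum_(S : {set 'I_(size mu)}) g (fun i : 'I_(size mu) => nth 0 mu i) S *
                                g (fun i : 'I_(size mu) => nth 0 mu i) (~: S).
Proof.
pose h := fun S : {set 'I_(size mu)} => [tuple (i \in S) | i < size mu].
pose h' := fun t : (size mu).-tuple bool => [set i | tnth t i].
rewrite (reindex h); last first.
  apply: onW_bij; exists h' => [S|t].
    by apply/setP => i; rewrite inE tnth_mktuple.
  by apply: eq_from_tnth => i; rewrite tnth_mktuple inE.
apply: eq_bigr => S _.
rewrite (Gs_gen (T := S) (size_tuple (h S))); last by move=> i; rewrite nth_mktuple.
have hs : size (map negb (h S)) = size mu by rewrite size_map size_tuple.
rewrite (Gs_gen (T := ~: S) hs) //.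
by move=> i; rewrite (nth_map false) ?size_tuple // nth_mktuple inE.
Qed.

Lemma mem_le_sumn s y : y \in s -> (y <= sumn s)%N.
Proof.
elim: s => //= z s IH; rewrite inE => /orP[/eqP ->|/IH h]; first exact: leq_addr.
exact: leq_trans h (leq_addl _ _).
Qed.

Lemma pair_eq (mu : seq nat) (m m0 : bitseq) : sorted geq mu ->
  size m = size mu -> size m0 = size mu ->
  ((mask m mu, mask (map negb m) mu) == (mask m0 mu, mask (map negb m0) mu)) =
  perm_eq (mask m mu) (mask m0 mu).
Proof.
move=> srt hm hm0.
have tr : transitive geq by move=> y x z h1 h2; exact: leq_trans h2 h1.
have an : antisymmetric geq by move=> x y h; apply/esym/anti_leq; move: h; rewrite /= andbC.
apply/idP/idP => [/eqP [-> _]|p]; first exact: perm_refl.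
have e1 := sorted_eq tr an (sorted_mask tr m srt) (sorted_mask tr m0 srt) p.
apply/eqP; congr (_, _); first exact: e1.
apply: (sorted_eq tr an (sorted_mask tr _ srt) (sorted_mask tr _ srt)).
apply/permP => a; apply/eqP; rewrite -(eqn_add2l (count a (mask m mu))).
by rewrite count_mask_compl // e1 count_mask_compl.
Qed.

Lemma all_maskP (P : pred nat) (m : bitseq) (s : seq nat) : all P s -> all P (mask m s).
Proof. by move=> /allP h; apply/allP => z /mem_mask /h. Qed.

Lemma fps_step mu : all (fun y => 0 < y)%N mu -> sorted geq mu ->
  fps_mul base_series base_series mu =
  (\sum_(t : (size mu).-tuple bool) Gs (mask t mu) * Gs (mask (map negb t) mu)) / (zee mu)%:R.
Proof.
move=> pos srt.
rewrite /fps_mul /splittings undup_sum big_map big_enum /= mulr_suml.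
apply: eq_bigr => t _.
pose B := (sumn mu).+1.
have hB : all (fun y => y < B)%N mu by apply/allP => y /mem_le_sumn.
have hcnt : count_mem (mask (tval t) mu, mask (map negb (tval t)) mu)
   [seq (mask (tval m) mu, mask (map negb (tval m)) mu) | m <- enum {: (size mu).-tuple bool}]
   = \prod_(j < B) 'C(count_mem (j : nat) mu, count_mem (j : nat) (mask t mu)).
  transitivity (count (fun m => (mask m mu, mask (map negb m) mu) ==
      (mask (tval t) mu, mask (map negb (tval t)) mu)) (map val (enum {: (size mu).-tuple bool}))).
    by rewrite !count_map.
  rewrite (permP (perm_allbits _)) -(fibre hB (all_maskP _ hB)).
  apply: eq_in_count => m; rewrite mem_allbits => /eqP hm.
  exact: pair_eq srt hm (size_tuple t).
rewrite hcnt !base_eq ?all_maskP // -(zee_split (m := t) hB (size_tuple t)) !natrM.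
have h0 : forall k, (0 < k)%N -> k%:R != 0 :> rat by move=> k k0; rewrite pnatr_eq0 -lt0n.
have hz1 := h0 _ (zee_gt0 (all_maskP t pos)).
have hz2 := h0 _ (zee_gt0 (all_maskP (map negb t) pos)).
have hN : (\prod_(j < B) 'C(count_mem (j : nat) mu, count_mem (j : nat) (mask t mu)))%:R != 0 :> rat.
  apply: h0; rewrite lt0n; apply/eqP => e.
  have := zee_gt0 pos; rewrite -(zee_split (m := t) hB (size_tuple t)) e.
  by rewrite !mul0n.
by field; rewrite hz1 hz2 hN.
Qed.

Theorem propositionA3 :
  forall mu : seq nat, is_partition mu ->
    lhs_series mu = 2^-1 * fps_mul base_series base_series mu.
Proof.
move=> mu /andP[srt pos].
rewrite fps_step // sum_sets lhs_eq //.
set x := fun i : 'I_(size mu) => nth 0 mu i.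
have -> : \sum_(S : {set 'I_(size mu)}) g x S * g x (~: S) =
    \sum_(S : {set 'I_(size mu)} | S \subset [set: 'I_(size mu)]) g x S * g x ([set: 'I_(size mu)] :\: S).
  by apply: eq_big => S; rewrite ?subsetT // setTD.
rewrite T_formula T_value cardsT card_ord.
have -> : xs x [set: 'I_(size mu)] = (sumn mu)%:R.
  rewrite /xs sumnE (big_nth 0) big_mkord; congr (_%:R).
  by apply: eq_bigl => i; rewrite in_setT.
have hz : (zee mu)%:R != 0 :> rat by rewrite pnatr_eq0 -lt0n zee_gt0.
by case: ifP => _; field; rewrite hz.
Qed.
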